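(* Let $\hat\kappa>0$ and $\mathbb{W}\in\mathbb{R}$. For each $\mathbb{W}'\in\mathbb{R}$ let $\alpha^*_{\hat\kappa}(\mathbb{W}')=\mathrm{Prob}(W^*_T<\mathbb{W}')$, where $W^*_T$ is the terminal wealth under an optimal control $\mathcal{P}^*_0$ of $\text{EW-LS}_{t_0}(\mathbb{W}',\hat\kappa)$, and let $\mathcal{D}^+_{LS}=\{(\mathbb{W}',\hat\kappa'):\hat\kappa'>0,\ 0<\alpha^*_{\hat\kappa'}(\mathbb{W}')<1\}$. Suppose $(\mathbb{W},\hat\kappa)\in\mathcal{D}^+_{LS}$ and that the following invertibility assumption holds at $(\mathbb{W},\hat\kappa)$: $\alpha^*_{\hat\kappa}(\cdot)$ is well defined (its value does not depend on the choice of optimal control) and for every $\mathbb{W}'\ne\mathbb{W}$ with $(\mathbb{W}',\hat\kappa)\in\mathcal{D}^+_{LS}$ we have $\alpha^*_{\hat\kappa}(\mathbb{W}')\ne\alpha^*_{\hat\kappa}(\mathbb{W})$. Then, writing $\alpha^*=\alpha^*_{\hat\kappa}(\mathbb{W})$, we have $(\alpha^*,\alpha^*\hat\kappa)\in\{(\alpha,\kappa):0<\alpha<1,\kappa>0\}$, and any solution of $\text{EW-LS}_{t_0}(\mathbb{W},\hat\kappa)$ is a solution of $\text{EW-ES}_{t_0}(\alpha^*,\alpha^*\hat\kappa)$.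
   Context: Decumulation problem on horizon $[0,T]$. Two assets: a stock index and a bond index; $S_t$, $B_t$ denote the real amounts invested, $W_t=S_t+B_t$. Between rebalancing times they evolve without control as jump diffusions $\frac{dS_t}{S_{t^-}}=(\mu^s-\lambda^s\gamma^s)dt+\sigma^s dZ^s+d\big(\sum_{i=1}^{\pi^s_t}(\xi^s_i-1)\big)$, $\frac{dB_t}{B_{t^-}}=(\mu^b-\lambda^b\gamma^b+\mu^b_c\mathbf 1_{\{B_{t^-}<0\}})dt+\sigma^b dZ^b+d\big(\sum_{i=1}^{\pi^b_t}(\xi^b_i-1)\big)$, where $\pi^s,\pi^b$ are Poisson processes with intensities $\lambda^s,\lambda^b$, $\log\xi^{s},\log\xi^b$ are i.i.d. double-exponential jump sizes, $\gamma^{s}=E[\xi^s-1]$, $\gamma^b=E[\xi^b-1]$, $dZ^s dZ^b=\rho_{sb}dt$, and the jump processes are independent of each other and of the Brownian motions. Rebalancing times $t_0=0<t_1<\dots<t_M=T$, equally spaced. At each $t_i$ the investor withdraws $\mathfrak{q}_i$, so $W(t_i^+)=W(t_i^-)-\mathfrak{q}_i$, then sets $S(t_i^+)=\mathfrak{p}_iW(t_i^+)$, $B(t_i^+)=(1-\mathfrak{p}_i)W(t_i^+)$. Controls $(\mathfrak{q}_i,\mathfrak{p}_i)$ are feedback functions of the state $(S(t_i^-),B(t_i^-))$ and $t_i$. Admissibility: for $i<M$, $\mathfrak{q}_i\in[\mathfrak{q}_{\min},\mathfrak{q}_{\max}]$ if $W_i^-\ge\mathfrak{q}_{\max}$ and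 $\mathfrak{q}_i\in[\mathfrak{q}_{\min},\max(\mathfrak{q}_{\min},W_i^-)]$ if $W_i^-<\mathfrak{q}_{\max}$; $\mathfrak{q}_M=0$; $\mathfrak{p}_i\in[0,1]$ if $W_i^+>0$ and $i<M$, $\mathfrak{p}_i=0$ if $W_i^+\le 0$ or $i=M$. $\mathcal{A}$ is the set of admissible controls $\mathcal{P}_0=\{(\mathfrak{q}_i,\mathfrak{p}_i)\}_{i=0}^M$. $E_{\mathcal{P}_0}^{(s,b),t_0^-}$ is expectation under control $\mathcal{P}_0$ given initial state $(S(t_0^-),B(t_0^-))=(s,b)$; $W_T$ is terminal wealth; $\epsilon$ is a fixed real stabilization constant. Standing assumption: the terminal wealth $W_T$ has a continuous distribution. $\text{EW-LS}_{t_0}(\mathbb{W},\hat\kappa)$: $\sup_{\mathcal{P}_0\in\mathcal{A}} E_{\mathcal{P}_0}^{(s,b),t_0^-}\big[\sum_{i=0}^M\mathfrak{q}_i+\hat\kappa\min(W_T-\mathbb{W},0)+\epsilon W_T\big]$. $\text{EW-ES}_{t_0}(\alpha,\kappa)$: $\sup_{\mathcal{P}_0\in\mathcal{A}} E_{\mathcal{P}_0}^{(s,b),t_0^-}\big[\sum_{i=0}^M\mathfrak{q}_i+\kappa\sup_{W'}\big(W'+\tfrac1\alpha\min(W_T-W',0)\big)+\epsilon W_T\big]$, equivalently $\sup_{W'}\sup_{\mathcal{P}_0}E[\sum\mathfrak{q}_i+\kappa(W'+\tfrac1\alpha\min(W_T-W',0))+\epsilon W_T]$; for each $(\alpha,\kappa)$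 the maximizing $W'$ (denoted $\mathbb{W}^*$) is assumed to exist. *)

(* Defs.v *)
From HB Require Import structures.
From mathcomp Require Import all_boot all_order all_algebra.
From mathcomp Require Import all_classical all_reals all_analysis.
Set Implicit Arguments. Unset Strict Implicit. Unset Printing Implicit Defensive.
Import Order.TTheory GRing.Theory Num.Theory.
Local Open Scope classical_set_scope.
Local Open Scope ring_scope.

(* Abstract decumulation model: a probability space (T, P), a type [Ctrl] of
   admissible controls P_0 in A, and for each control the random variables
   [Qsum c] = sum_{i=0}^M q_i and [WT c] = W_T (terminal wealth). *)

Section Decum.
Context {d : measure_display} {T : measurableType d} {R : realType}
        (P : probability T R) (Ctrl : Type)
        (Qsum WT : Ctrl -> T -> R) (eps : R).

Definition J_LS (W khat : R) (c : Ctrl) : \bar R :=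
  (\int[P]_t ((Qsum c t + khat * Num.min (WT c t - W) 0 + eps * WT c t)%:E))%E.

Definition LS_solution (W khat : R) (c : Ctrl) : Prop :=
  forall c' : Ctrl, (J_LS W khat c' <= J_LS W khat c)%E.

Definition G_ES (alpha kappa : R) (c : Ctrl) (W' : R) : \bar R :=
  (\int[P]_t ((Qsum c t + kappa * (W' + alpha^-1 * Num.min (WT c t - W') 0)
               + eps * WT c t)%:E))%E.

Definition J_ES (alpha kappa : R) (c : Ctrl) : \bar R :=
  ereal_sup (range (G_ES alpha kappa c)).

Definition ES_solution (alpha kappa : R) (c : Ctrl) : Prop :=
  forall c' : Ctrl, (J_ES alpha kappa c' <= J_ES alpha kappa c)%E.

Definition V_ES (alpha kappa W' : R) : \bar R :=
  ereal_sup (range (fun c => G_ES alpha kappa c W')).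

(* a = alpha^*_{khat}(W') for some optimal control of EW-LS(W', khat) *)
Definition alpha_rel (khat W' a : R) : Prop :=
  exists c : Ctrl, LS_solution W' khat c /\
    a%:E = P [set t | WT c t < W'].

Definition alpha_welldef (khat : R) : Prop :=
  forall W' a b, alpha_rel khat W' a -> alpha_rel khat W' b -> a = b.

Definition in_Dplus (W' khat' : R) : Prop :=
  0 < khat' /\ exists a, alpha_rel khat' W' a /\ 0 < a /\ a < 1.

End Decum.

(* Main.v *)
Require Import Defs.
From HB Require Import structures.
From mathcomp Require Import all_boot all_order all_algebra.
From mathcomp Require Import all_classical all_reals all_analysis.
From mathcomp Require Import lra ring.
Import Order.TTheory GRing.Theory Num.Theory.
Local Open Scope classical_set_scope.
Local Open Scope ring_scope.

Section H.
Context {d : measure_display} {T : measurableType d} {R : realType} (P : probability T R).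

Definition IR (f : T -> R) := P.-integrable setT (fun t => (f t)%:E).

Lemma IR_add f g : IR f -> IR g -> IR (fun t => f t + g t).
Proof.
move=> hf hg; apply: (eq_integrable measurableT _ _ _ (integrableD measurableT hf hg)) => t _ /=.
by rewrite EFinD.
Qed.

Lemma IR_scale k f : IR f -> IR (fun t => k * f t).
Proof.
move=> hf; apply: (eq_integrable measurableT _ _ _ (integrableZl measurableT k hf)) => t _ /=.
by rewrite EFinM.
Qed.

Lemma IR_cst k : IR (fun _ => k).
Proof. exact: (finite_measure_integrable_cst P k measurableT). Qed.

Lemma IR_indic A : measurable A -> IR (fun t => \1_A t).
Proof. exact: integrable_indic. Qed.

Lemma IR_min0 f w : measurable_fun setT f -> IR f -> IR (fun t => Num.min (f t - w) 0).
Proof.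
move=> mf hf.
have hg : IR (fun t => `|f t| + `|w|).
  apply: IR_add; last exact: IR_cst.
  exact: (eq_integrable measurableT _ _ _ (integrable_abse hf)).
have := @le_integrable _ _ _ P setT measurableT _ _ _ _ hg. apply. 
  apply/measurable_realfun.measurable_EFinP; apply: measurable_realfun.measurable_minr; last exact: measurable_cst.
  by apply: measurable_realfun.measurable_funD => //; exact: measurable_cst.
move=> t _; rewrite lee_fin /= [X in _ <= X]ger0_norm ?addr_ge0 //.
rewrite /Num.min; case: ifP => h.
  by rewrite (le_trans (ler_normD _ _)) // normrN.
by rewrite normr0 addr_ge0.
Qed.

Lemma int_add f g : IR f -> IR g ->
  (\int[P]_t (f t + g t)%:E = \int[P]_t (f t)%:E + \int[P]_t (g t)%:E)%E.
Proof.
move=> hf hg; rewrite -integralD //; apply: eq_integral => t _; by rewrite EFinD.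
Qed.

Lemma int_scale k f : IR f -> (\int[P]_t (k * f t)%:E = k%:E * \int[P]_t (f t)%:E)%E.
Proof.
move=> hf; rewrite -integralZl //; apply: eq_integral => t _; by rewrite EFinM.
Qed.

Lemma int_cst k : (\int[P]_t (k%:E) = k%:E)%E.
Proof. rewrite (integral_cst P measurableT). rewrite -[in RHS](mule1 k%:E); congr (_ * _)%E; exact: probability_setT. Qed.

Lemma int_indic A : measurable A -> (\int[P]_t (\1_A t)%:E = P A)%E.
Proof. by move=> mA; rewrite integral_indic // setIT. Qed.

End H.

Arguments IR_add {d T R P f g}.
Arguments IR_scale {d T R P} k {f}.
Arguments IR_cst {d T R P} k.
Arguments IR_indic {d T R P A}.
Arguments IR_min0 {d T R P f} w.
Arguments int_add {d T R P f g}.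
Arguments int_scale {d T R P} k {f}.
Arguments int_cst {d T R} P k.
Arguments int_indic {d T R P A}.

Lemma ptA (R : realType) (x w h k : R) : 0 <= k -> 0 < h ->
  k * Num.min (x - w) 0 + (- (k * h)) * (if x < w + h then 1 else 0)
  <= k * Num.min (x - (w + h)) 0.
Proof.
move=> k0 h0; rewrite !minEle.
case: ifP => a; case: ifP => b; case: ifP => c; nra.
Qed.

Lemma ptB (R : realType) (x w h k : R) : 0 <= k -> 0 < h ->
  k * Num.min (x - w) 0 + (k * h) * (if x <= w - h then 1 else 0)
  <= k * Num.min (x - (w - h)) 0.
Proof.
move=> k0 h0; rewrite !minEle.
case: ifP => a; case: ifP => b; case: ifP => c; nra.
Qed.

Theorem proposition2
  (d : measure_display) (T : measurableType d) (R : realType)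
  (P : probability T R) (Ctrl : Type) (Qsum WT : Ctrl -> T -> R) (eps : R)
  (* the withdrawals and terminal wealth are integrable random variables *)
  (hQ : forall c, measurable_fun setT (Qsum c) /\
                  P.-integrable setT (fun t => (Qsum c t)%:E))
  (hW : forall c, measurable_fun setT (WT c) /\
                  P.-integrable setT (fun t => (WT c t)%:E))
  (* standing assumption: W_T has a continuous distribution *)
  (hcont : forall c (w : R), P [set t | WT c t = w] = 0%E)
  (* standing assumption: the maximizing W' = W^* of EW-ES exists *)
  (hWstar : forall alpha kappa : R, 0 < alpha < 1 -> 0 < kappa ->
     exists Wst : R, forall W' : R,
       (V_ES P Qsum WT eps alpha kappa W' <= V_ES P Qsum WT eps alpha kappa Wst)%E)
  (khat W : R)
  (* alpha^*_{khat}(W') is defined for every W': EW-LS(W', khat) has an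
     optimal control for each W' *)
  (hex : forall W' : R, exists c : Ctrl, LS_solution P Qsum WT eps W' khat c)
  (hD : in_Dplus P Qsum WT eps W khat)
  (* invertibility assumption at (W, khat) *)
  (hwd : alpha_welldef P Qsum WT eps khat)
  (hinv : forall W' : R, W' <> W -> in_Dplus P Qsum WT eps W' khat ->
     forall a a', alpha_rel P Qsum WT eps khat W' a ->
                  alpha_rel P Qsum WT eps khat W a' -> a <> a') :
  forall astar : R, alpha_rel P Qsum WT eps khat W astar ->
    (0 < astar < 1 /\ 0 < astar * khat) /\
    forall c : Ctrl, LS_solution P Qsum WT eps W khat c ->
      ES_solution P Qsum WT eps astar (astar * khat) c.
Proof.
move=> astar Ha.
case: hD => khat0 [a [Haw [a0 a1]]].
have aE : astar = a := hwd _ _ _ Ha Haw.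
subst a.
have kap0 : 0 < astar * khat by apply: mulr_gt0.
split; first by split => //; apply/andP; split.
set kap := astar * khat.
have Jint : forall w c, IR P (fun t => Qsum c t + khat * Num.min (WT c t - w) 0 + eps * WT c t).
  move=> w c; apply: IR_add; [apply: IR_add|].
  - exact: (hQ c).2.
  - by apply: IR_scale; apply: IR_min0; [exact: (hW c).1 | exact: (hW c).2].
  - by apply: IR_scale; exact: (hW c).2.
have Jfin : forall w c, J_LS P Qsum WT eps w khat c = (fine (J_LS P Qsum WT eps w khat c))%:E.
  move=> w c; rewrite fineK //; exact: (integrable_fin_num measurableT (Jint w c)).
have GE : forall c w, G_ES P Qsum WT eps astar kap c w = (J_LS P Qsum WT eps w khat c + (kap * w)%:E)%E.
  move=> c w; rewrite /G_ES /J_LS -(int_cst P (kap*w)) -int_add //; last exact: IR_cst.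
  apply: eq_integral => t _; congr EFin; rewrite /kap; field.
  by rewrite gt_eqF.
have VES : forall w c, LS_solution P Qsum WT eps w khat c ->
    V_ES P Qsum WT eps astar kap w = G_ES P Qsum WT eps astar kap c w.
  move=> w c hc; apply/le_anti/andP; split.
  - apply: ge_ereal_sup => _ [c' _ <-]; rewrite !GE; apply: leeD2r; exact: hc.
  - by apply: ereal_sup_ubound; exists c.
have [Wst hWst] := hWstar astar kap (ltac:(by apply/andP; split)) kap0.
have [cs hcs] := hex Wst.
have key : forall w, (J_LS P Qsum WT eps w khat cs + (kap*w)%:E <= J_LS P Qsum WT eps Wst khat cs + (kap*Wst)%:E)%E.
  move=> w; rewrite -!GE -(VES Wst cs hcs); apply: le_trans (hWst w).
  by apply: ereal_sup_ubound; exists cs.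
have mX : measurable_fun setT (WT cs) := (hW cs).1.
have mlt : forall r, measurable [set t | WT cs t < r].
  move=> r; have := mX measurableT _ (measurable_itv `]-oo, r[); rewrite setTI.
  congr measurable; apply/seteqP; split => t /=; by rewrite in_itv.
have mle : forall r, measurable [set t | WT cs t <= r].
  move=> r; have := mX measurableT _ (measurable_itv `]-oo, r]); rewrite setTI.
  congr measurable; apply/seteqP; split => t /=; by rewrite in_itv.
have Pfin : forall A, measurable A -> P A = (fine (P A))%:E.
  move=> A mA; rewrite fineK // ge0_fin_numE //.
  exact: le_lt_trans (probability_le1 P mA) (ltey _).
have Jr : forall w c, exists j, J_LS P Qsum WT eps w khat c = j%:E.
  by move=> w c; exists (fine (J_LS P Qsum WT eps w khat c)); exact: Jfin.
have Pr : forall A, measurable A -> exists p, P A = p%:E.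
  by move=> A mA; exists (fine (P A)); exact: Pfin.
have [j0 E0] := Jr Wst cs.
have stepA : forall h : R, 0 < h -> (astar%:E <= P [set t | (WT cs t < Wst + h)%R])%E.
  move=> h h0.
  have lb : (J_LS P Qsum WT eps Wst khat cs + (-(khat*h))%:E * P [set t | (WT cs t < Wst + h)%R]
             <= J_LS P Qsum WT eps (Wst + h) khat cs)%E.
    rewrite /J_LS -(int_indic (mlt (Wst + h))) -int_scale; last exact: IR_indic (mlt _).
    rewrite -int_add //; last exact: IR_scale _ (IR_indic (mlt _)).
    apply: (le_integral measurableT).
    - exact: IR_add (Jint _ _) (IR_scale _ (IR_indic (mlt _))).
    - exact: Jint.
    move=> t _; rewrite lee_fin.
    have := @ptA _ (WT cs t) Wst h khat (ltW khat0) h0.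
    have -> : \1_[set t | WT cs t < Wst + h] t = if WT cs t < Wst + h then 1 else 0 :> R.
      by rewrite indicE; case: ifP => hh; [rewrite mem_set | rewrite memNset //= hh].
    move: (khat * Num.min (WT cs t - Wst) 0) (khat * Num.min (WT cs t - (Wst + h)) 0) (- (khat * h) * _) => m1 m2 z; lra.
  have := key (Wst + h).
  have [j1 E1] := Jr (Wst + h) cs.
  have [p Ep] := Pr _ (mlt (Wst + h)).
  move: lb; rewrite E0 E1 Ep -!EFinM -!EFinD !lee_fin => lb k1.
  have kh : 0 < khat * h by apply: mulr_gt0.
  rewrite /kap in k1; nra.
have stepB : forall h : R, 0 < h -> (P [set t | (WT cs t <= Wst - h)%R] <= astar%:E)%E.
  move=> h h0.
  have lb : (J_LS P Qsum WT eps Wst khat cs + (khat*h)%:E * P [set t | (WT cs t <= Wst - h)%R]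
             <= J_LS P Qsum WT eps (Wst - h) khat cs)%E.
    rewrite /J_LS -(int_indic (mle (Wst - h))) -int_scale; last exact: IR_indic (mle _).
    rewrite -int_add //; last exact: IR_scale _ (IR_indic (mle _)).
    apply: (le_integral measurableT).
    - exact: IR_add (Jint _ _) (IR_scale _ (IR_indic (mle _))).
    - exact: Jint.
    move=> t _; rewrite lee_fin.
    have := @ptB _ (WT cs t) Wst h khat (ltW khat0) h0.
    have -> : \1_[set t | WT cs t <= Wst - h] t = if WT cs t <= Wst - h then 1 else 0 :> R.
      by rewrite indicE; case: ifP => hh; [rewrite mem_set | rewrite memNset //= hh].
    move: (khat * Num.min (WT cs t - Wst) 0) (khat * Num.min (WT cs t - (Wst - h)) 0) ((khat * h) * _) => m1 m2 z; lra.
  have := key (Wst - h).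
  have [j1 E1] := Jr (Wst - h) cs.
  have [p Ep] := Pr _ (mle (Wst - h)).
  move: lb; rewrite E0 E1 Ep -!EFinM -!EFinD !lee_fin => lb k1.
  have kh : 0 < khat * h by apply: mulr_gt0.
  rewrite /kap in k1; nra.
have meq : measurable [set t | WT cs t = Wst].
  have := mX measurableT _ (measurable_set1 Wst); rewrite setTI.
  congr measurable; apply/seteqP; split => t /=; by [].
have invpos : forall n : nat, 0 < n.+1%:R^-1 :> R by move=> n; rewrite invr_gt0.
have invle : forall n m : nat, (n <= m)%N -> m.+1%:R^-1 <= n.+1%:R^-1 :> R.
  by move=> n m nm; rewrite lef_pV2 ?posrE // ler_nat.
pose A n := [set t | (WT cs t < Wst + n.+1%:R^-1)%R].
have capA : \bigcap_n A n = [set t | (WT cs t <= Wst)%R].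
  apply/seteqP; split => t /=.
  - move=> hA; rewrite leNgt; apply/negP => lt.
    have [k hk] := ltr_add_invr lt.
    have := hA k I; rewrite /A /= => h2; have := lt_trans h2 hk; by rewrite ltxx.
  - by move=> hle n _; rewrite /A /=; apply: le_lt_trans hle _; rewrite ltrDl invpos.
have cvA : ((P \o A) n @[n --> \oo] --> P (\bigcap_n A n))%classic.
  apply: nonincreasing_cvg_mu.
  - exact: le_lt_trans (probability_le1 P (mlt _)) (ltey _).
  - by move=> n; exact: mlt.
  - rewrite capA; exact: mle.
  - move=> n m nm; apply/subsetPset => t; rewrite /A /= => ht; apply: lt_le_trans ht _; rewrite lerD2l; exact: invle.
have geA : (astar%:E <= P [set t | (WT cs t <= Wst)%R])%E.
  rewrite -capA -(cvg_lim (@ereal_hausdorff R) cvA).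
  apply: lime_ge; first exact: cvgP cvA.
  by apply: nearW => n; exact: stepA (invpos n).
pose B n := [set t | (WT cs t <= Wst - n.+1%:R^-1)%R].
have cupB : \bigcup_n B n = [set t | (WT cs t < Wst)%R].
  apply/seteqP; split => t /=.
  - move=> [n _]; rewrite /B /= => hb; apply: le_lt_trans hb _.
    by rewrite ltrBlDr ltrDl invpos.
  - move=> lt; have [k hk] := ltr_add_invr lt; exists k => //; rewrite /B /=.
    by rewrite lerBrDr ltW.
have cvB : ((P \o B) n @[n --> \oo] --> P (\bigcup_n B n))%classic.
  apply: nondecreasing_cvg_mu.
  - by move=> n; exact: mle.
  - rewrite cupB; exact: mlt.
  - move=> n m nm; apply/subsetPset => t; rewrite /B /= => ht; apply: le_trans ht _.
    rewrite lerD2l lerN2; exact: invle.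
have leB : (P [set t | (WT cs t < Wst)%R] <= astar%:E)%E.
  rewrite -cupB -(cvg_lim (@ereal_hausdorff R) cvB).
  apply: lime_le; first exact: cvgP cvB.
  by apply: nearW => n; exact: stepB (invpos n).
have splitE : [set t | (WT cs t <= Wst)%R] = [set t | (WT cs t < Wst)%R] `|` [set t | WT cs t = Wst].
  apply/seteqP; split => t /=.
  - by rewrite le_eqVlt => /orP[/eqP->|->]; [right|left].
  - by move=> [h|->]; [exact: ltW|].
have PX : P [set t | (WT cs t < Wst)%R] = astar%:E.
  apply/le_anti/andP; split; first exact: leB.
  move: geA; rewrite splitE measureU //.
  - move=> h; apply: le_trans h _; have h0 : forall x y : \bar R, y = 0%E -> (x + y)%R = x by move=> x y ->; rewrite addr0.
    rewrite h0 //; exact: hcont.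
  - apply/seteqP; split => t //= [h1 h2]; by rewrite h2 ltxx in h1.
have relst : alpha_rel P Qsum WT eps khat Wst astar by exists cs.
have WE : Wst = W.
  case: (eqVneq Wst W) => // /eqP ne; exfalso.
  apply: (hinv Wst ne _ astar astar relst Ha erefl).
  by split => //; exists astar.
subst Wst.
move=> c hc c'; rewrite /J_ES.
apply: (@le_trans _ _ (V_ES P Qsum WT eps astar kap W)).
- apply: ge_ereal_sup => _ [w _ <-]; apply: le_trans (hWst w).
  by apply: ereal_sup_ubound; exists c'.
- rewrite (VES W c hc); by apply: ereal_sup_ubound; exists W.
Qed.
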